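(* Let $g_1,g_2$ be monic divisors of $x^m-1$ over $\mathbb{F}_{q^2}$, $v_1\in\mathcal{R}$, and let $\mathcal{D}_1$ be the QC code of length $2m$ over $\mathbb{F}_{q^2}$ generated by $(g_1,v_1g_1)$ and $(0,g_2)$. Then $\mathcal{D}_1$ is Hermitian dual-containing iff $g_1\mid g_1^{\perp_H}$, $g_1\mid g_2^{\perp_H}\overline{v_1}^{[q]}$ and $g_2\mid g_2^{\perp_H}(1+v_1\overline{v_1}^{[q]})$.
   Context: $q$ a prime power; $\mathcal{R}=\mathbb{F}_{q^2}[x]/(x^m-1)$, elements identified with representatives of degree $<m$; $[k]=(k_0,\dots,k_{m-1})$; $\overline{k}(x)=k(x^{-1})\bmod(x^m-1)$; $k^{[q]}=\sum k_i^qx^i$; $f^*(x)=x^{\deg f}f(1/x)$; for $k\in\mathcal{R}$, $f=\frac{x^m-1}{\gcd(k,x^m-1)}$, $k^{\perp}=f(0)^{-1}f^*$, $k^{\perp_H}=(k^{[q]})^{\perp}$. ''$g\mid a$'' for $g\mid x^m-1$ means $g$ divides the representative of $a$. The QC code generated by $(u_{i1},u_{i2})$, $i=1,2$, is $\{([r_1u_{11}+r_2u_{21}],[r_1u_{12}+r_2u_{22}]):r_i\in\mathcal{R}\}$. Hermitian inner product $\sum u_i^qv_i$; dual-containing means $\mathcal{D}_1^{\perp_H}\subseteq\mathcal{D}_1$. *)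

(* Defs.v *)
From HB Require Import structures.
From mathcomp Require Import all_boot all_order all_algebra.
Set Implicit Arguments. Unset Strict Implicit. Unset Printing Implicit Defensive.
Import Order.TTheory GRing.Theory.
Local Open Scope ring_scope.

Section QC.
Variable F : finFieldType.

Definition xm1 (m : nat) : {poly F} := 'X^m - 1.

(* representative of degree < m of the class of p in R = F[x]/(x^m-1) *)
Definition red (m : nat) (p : {poly F}) : {poly F} := p %% xm1 m.

Definition vecR (m : nat) (k : {poly F}) : 'rV[F]_m := poly_rV (red m k).

(* kbar(x) = k(x^{-1}) mod (x^m - 1), for k represented with degree < m *)
Definition rbar (m : nat) (k : {poly F}) : {poly F} :=
  \sum_(i < m) k`_i *: 'X^((m - i) %% m).

Definition frobq (q : nat) (k : {poly F}) : {poly F} :=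
  map_poly (fun a : F => a ^+ q) k.

(* reciprocal polynomial f^*(x) = x^(deg f) f(1/x) *)
Definition recip (f : {poly F}) : {poly F} := Poly (rev f).

Definition perp (m : nat) (k : {poly F}) : {poly F} :=
  let f := xm1 m %/ gcdp k (xm1 m) in (f.[0])^-1 *: recip f.

Definition perpH (m q : nat) (k : {poly F}) : {poly F} := perp m (frobq q k).

Definition QCcode (m : nat) (u11 u12 u21 u22 : {poly F}) :
    'rV[F]_m * 'rV[F]_m -> Prop :=
  fun c => exists r1 r2 : {poly F},
    c = (vecR m (r1 * u11 + r2 * u21), vecR m (r1 * u12 + r2 * u22)).

(* Hermitian inner product sum u_i^q v_i on F^m x F^m = F^(2m) *)
Definition hermIP (m q : nat) (u v : 'rV[F]_m * 'rV[F]_m) : F :=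
  \sum_(i < m) (u.1 0 i) ^+ q * v.1 0 i + \sum_(i < m) (u.2 0 i) ^+ q * v.2 0 i.

Definition hermDual (m q : nat) (C : 'rV[F]_m * 'rV[F]_m -> Prop) :
    'rV[F]_m * 'rV[F]_m -> Prop :=
  fun v => forall u, C u -> @hermIP m q u v = 0.

Definition herm_dual_containing (m q : nat) (C : 'rV[F]_m * 'rV[F]_m -> Prop) :
    Prop := forall v, @hermDual m q C v -> C v.

End QC.
Arguments hermIP {F} m q u v.
Arguments hermDual {F} m q C v.
Arguments herm_dual_containing {F} m q C.
Arguments QCcode {F} m u11 u12 u21 u22 c.
Arguments rbar {F} m k.
Arguments frobq {F} q k.
Arguments perpH {F} m q k.
Arguments red {F} m p.
Arguments vecR {F} m k.
Arguments perp {F} m k.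

(* Main.v *)
Require Import Defs.
From HB Require Import structures.
From mathcomp Require Import all_boot all_order all_algebra all_fingroup all_solvable all_field.
From mathcomp Require Import ring zify.
Import GRing.Theory.
Set Implicit Arguments. Unset Strict Implicit. Unset Printing Implicit Defensive.
Local Open Scope ring_scope.
Section Frob.
Variables (F : finFieldType) (q : nat).
Hypothesis Hq : [pchar F].-nat q.

Definition fq of [pchar F].-nat q : F -> F := fun x => x ^+ q.
Local Notation fqq := (fq Hq).

Lemma fq_nmod : nmod_morphism fqq.
Proof. by split=> [|x y]; rewrite /fq ?expr0n ?exprDn_pchar //; case: q Hq. Qed.
Lemma fq_monoid : monoid_morphism fqq.
Proof. by split=> [|x y]; rewrite /fq ?expr1n ?exprMn. Qed.
HB.instance Definition _ := GRing.isNmodMorphism.Build F F fqq fq_nmod.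
HB.instance Definition _ := GRing.isMonoidMorphism.Build F F fqq fq_monoid.

Lemma frobqE k : frobq q k = map_poly fqq k.
Proof. by []. Qed.
End Frob.
Lemma pnat_q (F : finFieldType) q : #|F| = (q ^ 2)%N -> [pchar F].-nat q.
Proof.
move=> HF; have [p pr chp] := finPcharP F.
rewrite (eq_pnat _ (pcharf_eq chp)).
have : p.-nat #|F|.
  by have := abelem_pgroup (fin_ring_pchar_abelem chp); rewrite /pgroup cardsT.
rewrite HF => H; apply: pnat_dvd H; exact: dvdn_mulr.
Qed.

Definition T {F : finFieldType} (k : nat) (p : {poly F}) : {poly F} :=
  \poly_(i < k) p`_(k.-1 - i).

Lemma recipT (F : finFieldType) (p : {poly F}) : recip p = T (size p) p.
Proof.
apply/polyP=> i; rewrite /recip /T coef_Poly coef_poly.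
case: ltnP => Hi.
  rewrite nth_rev //; by rewrite subnS -subn1 subnAC subn1.
by rewrite nth_default // size_rev.
Qed.

Lemma T_S (F : finFieldType) k (p : {poly F}) : T k.+1 p = 'X * T k p + (p`_k)%:P.
Proof.
apply/polyP=> i; rewrite /T coefD coefXM coefC !coef_poly.
case: i => [|i] //=; first by rewrite add0r subn0.
rewrite addr0 ltnS; case: ltnP => // Hi; congr (p`_ _); rewrite -!subn1; lia.
Qed.

Lemma T0 (F : finFieldType) (p : {poly F}) : T 0 p = 0.
Proof. by apply/polyP=> i; rewrite /T coef_poly coef0. Qed.

Lemma take_S (F : finFieldType) k (p : {poly F}) :
  take_poly k.+1 p = take_poly k p + p`_k *: 'X^k.
Proof.
apply/polyP=> i; rewrite coefD coefZ coefXn !coef_take_poly ltnS.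
case: (ltngtP i k) => [Hi|Hi|->]; rewrite ?mulr0 ?addr0 ?mulr1 ?add0r //.
Qed.

Lemma take0 (F : finFieldType) (p : {poly F}) : take_poly 0 p = 0.
Proof. by apply/polyP=> i; rewrite coef_take_poly coef0. Qed.
Section Cong.
Variables (F : finFieldType) (m : nat).
Hypothesis Hm : (0 < m)%N.
Local Notation n := (xm1 F m).

Lemma nE : n = 'X^m - 1. Proof. by []. Qed.

Lemma E1 k : n %| 'X^(k * m) - 1.
Proof.
elim: k => [|k IH]; first by rewrite mul0n expr0 subrr dvdp0.
have -> : 'X^(k.+1 * m) - 1 = 'X^m * ('X^(k * m) - 1) + n :> {poly F}.
  by rewrite nE mulSn exprD; ring.
by rewrite dvdp_add ?dvdp_mull // dvdpp.
Qed.

Lemma E2 j y : n %| 'X^j * y -> n %| y.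
Proof.
move=> H.
have -> : y = 'X^(j * (m.-1)) * ('X^j * y) - ('X^(j * m) - 1) * y.
  have -> : (j * m = j * m.-1 + j)%N by case: (m) Hm => // k _; rewrite mulnS addnC.
  by rewrite exprD; ring.
by rewrite dvdp_sub ?(dvdp_mull _ H) ?dvdp_mulr ?E1.
Qed.

Definition sig (p : {poly F}) := p \Po 'X^(m.-1).

Lemma sigM p r : sig (p * r) = sig p * sig r. Proof. exact: comp_polyM. Qed.
Lemma sigD p r : sig (p + r) = sig p + sig r. Proof. exact: comp_polyD. Qed.
Lemma sigB p r : sig (p - r) = sig p - sig r. Proof. exact: comp_polyB. Qed.

Lemma sig_n y : n %| y -> n %| sig y.
Proof.
case/dvdpP=> k ->; rewrite sigM dvdp_mull //.
rewrite /sig nE comp_polyB comp_polyC comp_Xn_poly -exprM polyC1.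
exact: E1.
Qed.

Lemma sigsig p : n %| sig (sig p) - p.
Proof.
rewrite /sig -comp_polyA comp_Xn_poly -exprM.
set Y := 'X^(m.-1 * m.-1).
have HY : n %| Y - 'X.
  apply: (@E2 m.-1).
  have -> : 'X^(m.-1) * (Y - 'X) = 'X^(m.-1 * m) - 1 - n :> {poly F}.
    rewrite /Y nE mulrBr -exprD.
    have -> : (m.-1 + m.-1 * m.-1 = m.-1 * m)%N.
      by case: (m) Hm => // k _ /=; rewrite mulnS.
    rewrite -exprSr prednK //; ring.
  by rewrite dvdp_sub ?E1 ?dvdpp.
elim/poly_ind: p => [|p c IH]; first by rewrite comp_poly0 subrr dvdp0.
rewrite !comp_poly_MXaddC.
have -> : (p \Po Y) * Y + c%:P - (p * 'X + c%:P) = (p \Po Y - p) * Y + p * (Y - 'X).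
  by ring.
by apply: dvdp_add; [apply: dvdp_mulr | apply: dvdp_mull].
Qed.


Lemma Sig k p : n %| 'X^k * sig (take_poly k p) - 'X * T k p.
Proof.
elim: k => [|k IH]; first by rewrite take0 T0 /sig comp_poly0 !mulr0 subrr dvdp0.
rewrite take_S T_S sigD /sig comp_polyZ comp_Xn_poly -exprM -mul_polyC.
set S := take_poly k p \Po 'X^(m.-1); set c := p`_k.
have -> : 'X^(k.+1) * (S + c%:P * 'X^(m.-1 * k)) - 'X * ('X * T k p + c%:P)
   = 'X * ('X^k * S - 'X * T k p) + c%:P * ('X * ('X^(k * m) - 1)).
  have E : ('X^(k.+1) * 'X^(m.-1 * k) = 'X * 'X^(k * m) :> {poly F}).
    rewrite -exprS -exprD; congr ('X^ _).
    case: (m) Hm => // j _ /=. lia.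
  rewrite mulrDr mulrCA E exprS; ring.
by rewrite dvdp_add ?dvdp_mull ?E1.
Qed.

End Cong.

Lemma congM (F : finFieldType) (n a a' b b' : {poly F}) :
  n %| a - a' -> n %| b - b' -> n %| a * b - a' * b'.
Proof.
move=> Ha Hb; have -> : a * b - a' * b' = (a - a') * b + a' * (b - b') by ring.
by apply: dvdp_add; [apply: dvdp_mulr | apply: dvdp_mull].
Qed.

Lemma congT (F : finFieldType) (n a b c : {poly F}) :
  n %| a - b -> n %| b - c -> n %| a - c.
Proof.
move=> H1 H2; have -> : a - c = (a - b) + (b - c) by ring.
exact: dvdp_add.
Qed.

Lemma congS (F : finFieldType) (n a b : {poly F}) : n %| a - b -> n %| b - a.
Proof. by move=> H; rewrite -opprB dvdpNr. Qed.

Lemma recip0 (F : finFieldType) : recip (0 : {poly F}) = 0.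
Proof. by rewrite /recip polyseq0. Qed.

Lemma size_recip (F : finFieldType) (p : {poly F}) : (size (recip p) <= size p)%N.
Proof. by rewrite recipT size_poly. Qed.

Lemma recipM (F : finFieldType) (p r : {poly F}) : recip (p * r) = recip p * recip r.
Proof.
have [->|p0] := eqVneq p 0; first by rewrite mul0r recip0 mul0r.
have [->|r0] := eqVneq r 0; first by rewrite mulr0 recip0 mulr0.
set M := size (p * r).
have sM : M = (size p + size r).-1 by rewrite /M size_mul.
have Mpos : (0 < M)%N by rewrite lt0n size_poly_eq0 mulf_neq0.
have Hp := Sig Mpos (size p) p; rewrite take_poly_id // -recipT in Hp.
have Hr := Sig Mpos (size r) r; rewrite take_poly_id // -recipT in Hr.
have Hpr := Sig Mpos M (p * r); rewrite take_poly_id // -recipT in Hpr.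
have H := congM Hp Hr.
set D := recip (p * r) - recip p * recip r.
have HD : xm1 F M %| 'X^2 * D.
  have E : 'X^(size p) * sig M p * ('X^(size r) * sig M r) = 'X * ('X^M * sig M (p * r)).
    have Hs : (size p + size r = M.+1)%N.
      by rewrite sM prednK // addn_gt0 lt0n size_poly_eq0 p0.
    rewrite sigM [in RHS]mulrA -exprS -Hs exprD; ring.
  rewrite E in H.
  have H2 := dvdp_mull 'X Hpr; rewrite mulrBr in H2.
  have := congT (congS H2) H.
  by rewrite /D; congr (_ %| _); ring.
move/E2: HD => /(_ Mpos) HD.
apply/eqP; rewrite -subr_eq0; apply/eqP; rewrite -/D.
apply/eqP; apply: contraT => D0.
have := dvdp_leq D0 HD; rewrite /xm1 size_Xn_sub_1 // ltnNge.
rewrite (leq_trans (size_polyD _ _)) // geq_max size_polyN.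
rewrite (leq_trans (size_recip _)) //=.
rewrite (leq_trans (size_polyMleq _ _)) // sM.
by rewrite -!subn1 leq_sub2r // leq_add // size_recip.
Qed.

Lemma recipC (F : finFieldType) (c : F) : recip c%:P = c%:P.
Proof.
have [->|c0] := eqVneq c 0; first by rewrite recip0.
apply/polyP=> i; rewrite recipT size_polyC c0 /T coef_poly coefC.
by case: i => [|i] //=; rewrite coefC.
Qed.

Lemma recipZ (F : finFieldType) (c : F) p : recip (c *: p) = c *: recip p.
Proof. by rewrite -!mul_polyC recipM recipC. Qed.

Lemma recip_eq0 (F : finFieldType) (p : {poly F}) : (recip p == 0) = (p == 0).
Proof.
apply/eqP/eqP=> [H|->]; last exact: recip0.
apply/eqP; rewrite -lead_coef_eq0; apply/eqP.
have := congr1 (fun r : {poly F} => r`_0) H; rewrite recipT /T coef_poly coef0 lead_coefE.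
case E: (size p) => [|k] /=; last by rewrite subn0.
by move=> _; rewrite nth_default // E.
Qed.

Lemma recip_n (F : finFieldType) m : (0 < m)%N -> recip (xm1 F m) = - xm1 F m.
Proof.
move=> Hm; apply/polyP=> i.
rewrite recipT /xm1 size_Xn_sub_1 // /T coef_poly coefN !coefB !coefXn !coef1 /=.
have m0 : (m == 0%N) = false by rewrite gtn_eqF.
have m0' : (0%N == m) = false by rewrite eq_sym m0.
case: ltnP => Hi; last first.
  by rewrite (gtn_eqF Hi) (gtn_eqF (leq_trans Hm (ltnW Hi))) subrr oppr0.
have [->|i0] := eqVneq i 0%N.
  by rewrite subn0 eqxx ?m0 ?m0' /= subr0 sub0r opprK.
have [->|im] := eqVneq i m.
  by rewrite subnn eqxx ?m0 ?m0' /= subr0 sub0r.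
have -> : (m - i == m)%N = false by apply/eqP; lia.
have -> : (m - i == 0)%N = false by apply/eqP; lia.
by rewrite ?(negbTE im) ?(negbTE i0) subrr oppr0.
Qed.

Section Main.
Variables (F : finFieldType) (q m : nat).
Hypothesis Hq : [pchar F].-nat q.
Hypothesis Hm : (0 < m)%N.
Local Notation n := (xm1 F m).
Local Notation fr := (map_poly (fq Hq)).

Lemma n_neq0 : n != 0.
Proof. by rewrite -size_poly_eq0 /xm1 size_Xn_sub_1. Qed.

Lemma fr_n : fr n = n.
Proof. by rewrite /xm1 rmorphB /= map_polyXn rmorph1. Qed.

Lemma fr_dvd y : n %| y -> n %| fr y.
Proof. by move=> H; rewrite -fr_n dvdp_map. Qed.

Lemma fr_sig p : fr (sig m p) = sig m (fr p).
Proof. by rewrite /sig map_comp_poly map_polyXn. Qed.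

Lemma fr_red p : fr (red m p) = red m (fr p).
Proof. by rewrite /red map_modp fr_n. Qed.

Lemma fr_cong a b : n %| a - b -> n %| fr a - fr b.
Proof. by move=> H; rewrite -rmorphB fr_dvd. Qed.


Lemma Kkey g : g \is monic -> g %| n ->
  forall c, (n %| sig m (fr g) * c) = (perpH m q g %| c).
Proof.
move=> mg dg c.
set G := fr g.
have mG : G \is monic by rewrite /G map_monic.
have G0 : G != 0 := monic_neq0 mG.
have dG : G %| n by rewrite -fr_n dvdp_map.
set H := n %/ G.
have nHG : H * G = n := divpK dG.
have H0 : H != 0.
  by apply: contra_neq n_neq0 => H0; rewrite -nHG H0 mul0r.
have Hperp : perpH m q g %= recip H.
  change (perp m G %= recip H); rewrite /perp.
  set f := n %/ gcdp G n.
  have ef : f %= H := eqp_div (eqpxx n) (dvdp_gcd_idl dG).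
  have fn : f %| n by rewrite (eqp_dvdl _ ef) -nHG dvdp_mulIl.
  have f0 : f.[0] != 0.
    apply/negP => /eqP f00.
    have : root n 0 by apply: root_dvdp fn _; apply/rootP.
    rewrite /root /xm1 !hornerE expr0n gtn_eqF //= sub0r oppr_eq0.
    by rewrite oner_eq0.
  apply: eqp_trans (eqp_scale _ (invr_neq0 f0)) _.
  case/eqpP: ef => [[c1 c2] /andP[c10 c20] e].
  by apply/eqpP; exists (c1, c2); rewrite ?c10 ?c20 //= -!recipZ e.
rewrite (eqp_dvdl _ Hperp).
have S := Sig Hm (size G) G; rewrite take_poly_id // -recipT in S.
have step1 : (n %| sig m G * c) = (n %| recip G * c).
  apply/idP/idP => h.
  - apply: (@E2 _ _ Hm 1%N); rewrite expr1.
    have -> : 'X * (recip G * c) = 'X^(size G) * (sig m G * c)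
         - ('X^(size G) * sig m G - 'X * recip G) * c by ring.
    by rewrite dvdp_sub ?(dvdp_mull _ h) ?(dvdp_mulr _ S).
  - apply: (@E2 _ _ Hm (size G)).
    have -> : 'X^(size G) * (sig m G * c) =
       ('X^(size G) * sig m G - 'X * recip G) * c + 'X * (recip G * c) by ring.
    by rewrite dvdp_add ?(dvdp_mulr _ S) ?(dvdp_mull _ h).
rewrite step1 -dvdpNl -recip_n // -nHG recipM [recip H * _]mulrC dvdp_mul2l //.
by rewrite recip_eq0.
Qed.

End Main.

Section Main2.
Variables (F : finFieldType) (q m : nat).
Hypothesis Hq : [pchar F].-nat q.
Hypothesis Hm : (0 < m)%N.
Local Notation n := (xm1 F m).
Local Notation fr := (map_poly (fq Hq)).

Definition P (u b : {poly F}) := \sum_(i < m) (u`_i) ^+ q * b`_i.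

Lemma cong_dvd x y : n %| x - y -> (n %| x) = (n %| y).
Proof.
move=> H; apply/idP/idP => h.
  have e : y = x - (x - y) by ring.
  by rewrite e dvdp_sub.
have e : x = (x - y) + y by ring.
by rewrite e dvdp_add.
Qed.

Lemma red_cong (x : {poly F}) : n %| red m x - x.
Proof.
rewrite /red {2}(divp_eq x n).
have -> : x %% n - (x %/ n * n + x %% n) = - (x %/ n) * n by ring.
exact: dvdp_mull.
Qed.

Lemma size_red (x : {poly F}) : (size (red m x) <= m)%N.
Proof. by rewrite -ltnS -(size_Xn_sub_1 F Hm) ltn_modp n_neq0. Qed.

Lemma L1 (w : {poly F}) : (size w <= m + m.-1)%N -> (red m w)`_(m.-1) = w`_(m.-1).
Proof.
move=> sw.
rewrite {2}(divp_eq w n) coefD /xm1 mulrBr mulr1 coefB coefMXn ltn_predL Hm.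
set d := w %/ _.
have -> : d`_(m.-1) = 0.
  apply: nth_default; rewrite /d size_divp ?n_neq0 // size_Xn_sub_1 //=.
  by rewrite leq_subLR.
by rewrite subr0 add0r.
Qed.

Lemma L2 (Z : {poly F}) : (forall k, (k < m)%N -> (red m ('X^k * Z))`_(m.-1) = 0) -> n %| Z.
Proof.
move=> H; apply/modp_eq0P.
set z := Z %% n.
have sz : (size z <= m)%N := size_red Z.
apply/polyP=> j; rewrite coef0.
have [jm|jm] := ltnP j m; last exact: nth_default (leq_trans sz jm).
have Hk : (m.-1 - j < m)%N by lia.
have := H _ Hk; rewrite /red -modp_mul -/z L1; last first.
  rewrite (leq_trans (size_polyMleq _ _)) // size_polyXn.
  rewrite addSn /= (leq_trans (leq_add (leqnn _) sz)) // addnC leq_add2l.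
  exact: leq_subr.
rewrite coefXnM.
have -> : (m.-1 < m.-1 - j)%N = false by apply/negbTE; rewrite -leqNgt leq_subr.
have -> : (m.-1 - (m.-1 - j) = j)%N by lia.
by [].
Qed.


Lemma stepA (w b : {poly F}) : (size b <= m)%N ->
  P (red m w) b = (red m (fr w * T m b))`_(m.-1).
Proof.
move=> sb.
have e : red m (fr w * T m b) = red m (fr (red m w) * T m b).
  by rewrite fr_red /red mulrC -modp_mul mulrC.
rewrite e L1; last first.
  rewrite (leq_trans (size_polyMleq _ _)) // size_map_poly.
  have h1 := size_red w; have h2 : (size (T m b) <= m)%N by exact: size_poly.
  move: (size (red m w)) (size (T m b)) h1 h2 => x y h1 h2; lia.
rewrite coefM prednK //; apply: eq_bigr => j _.
rewrite coef_map /= /fq /T coef_poly.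
have jm := ltn_ord j.
have -> : (m.-1 - j < m)%N by lia.
by have -> : (m.-1 - (m.-1 - j) = j)%N by lia.
Qed.


Lemma hermIP_E (u1 u2 a b : {poly F}) :
  hermIP m q (vecR m u1, vecR m u2) (poly_rV a, poly_rV b) =
  P (red m u1) a + P (red m u2) b.
Proof.
by rewrite /hermIP /P /vecR /=; congr (_ + _); apply: eq_bigr => i _; rewrite !mxE.
Qed.

Variables (g1 g2 v1 : {poly F}).

Lemma dualE (a b : {poly F}) : (size a <= m)%N -> (size b <= m)%N ->
  hermDual m q (QCcode m g1 (v1 * g1) 0 g2) (poly_rV a, poly_rV b) <->
  n %| fr g1 * (T m a + fr v1 * T m b) /\ n %| fr g2 * T m b.
Proof.
move=> sa sb.
set Z1 := fr g1 * _; set Z2 := fr g2 * _.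
have key : forall r1 r2, hermIP m q
    (vecR m (r1 * g1 + r2 * 0), vecR m (r1 * (v1 * g1) + r2 * g2))
    (poly_rV a, poly_rV b) = (red m (fr r1 * Z1 + fr r2 * Z2))`_(m.-1).
  move=> r1 r2; rewrite hermIP_E !stepA // -coefD /red -modpD.
  congr (_`_ _); congr (_ %% _); rewrite /Z1 /Z2 !rmorphD !rmorphM /= rmorph0.
  ring.
split.
  move=> Hd; split; apply: L2 => k km.
    have := Hd _ (ex_intro _ ('X^k) (ex_intro _ 0 erefl)).
    by rewrite key map_polyXn rmorph0 mul0r addr0.
  have := Hd _ (ex_intro _ 0 (ex_intro _ ('X^k) erefl)).
  by rewrite key map_polyXn rmorph0 mul0r add0r.
case=> h1 h2 u [r1 [r2 ->]]; rewrite key.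
have -> : red m (fr r1 * Z1 + fr r2 * Z2) = 0.
  by apply/modp_eq0P; rewrite dvdp_add ?(dvdp_mull _ h1) ?(dvdp_mull _ h2).
by rewrite coef0.
Qed.


Lemma sig_iff (y : {poly F}) : (n %| sig m y) = (n %| y).
Proof.
apply/idP/idP => h; last exact: sig_n.
by rewrite -(cong_dvd (sigsig Hm y)) sig_n.
Qed.

Lemma Tcong (a : {poly F}) : (size a <= m)%N -> n %| 'X^(m.-1) * sig m a - T m a.
Proof.
move=> sa; apply: (@E2 _ _ Hm 1%N); rewrite expr1 mulrBr mulrA -exprS prednK //.
by have := Sig Hm m a; rewrite take_poly_id.
Qed.

Lemma transl (G V a b : {poly F}) : (size a <= m)%N -> (size b <= m)%N ->
  (n %| G * (T m a + V * T m b)) = (n %| sig m G * (a + sig m V * b)).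
Proof.
move=> sa sb.
rewrite (cong_dvd (x := G * _) (y := 'X^(m.-1) * (G * (sig m a + V * sig m b)))); last first.
  have -> : G * (T m a + V * T m b) - 'X^(m.-1) * (G * (sig m a + V * sig m b)) =
     - (G * (('X^(m.-1) * sig m a - T m a) + V * ('X^(m.-1) * sig m b - T m b))) by ring.
  by rewrite dvdpNr dvdp_mull // dvdp_add ?Tcong ?dvdp_mull ?Tcong.
have -> : (n %| 'X^(m.-1) * (G * (sig m a + V * sig m b))) = (n %| G * (sig m a + V * sig m b)).
  by apply/idP/idP => h; [exact: E2 h | exact: dvdp_mull].
rewrite -sig_iff sigM sigD sigM.
apply: cong_dvd.
have -> : sig m G * (sig m (sig m a) + sig m V * sig m (sig m b)) - sig m G * (a + sig m V * b)
   = sig m G * ((sig m (sig m a) - a) + sig m V * (sig m (sig m b) - b)) by ring.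
by rewrite dvdp_mull // dvdp_add ?sigsig ?dvdp_mull ?sigsig.
Qed.

Lemma rbar_cong (v : {poly F}) : (size v <= m)%N -> n %| sig m v - rbar m v.
Proof.
move=> sv.
have ev : v = \sum_(i < m) v`_i *: 'X^i.
  rewrite -poly_def; apply/polyP => i; rewrite coef_poly.
  by case: ltnP => // h; rewrite nth_default // (leq_trans sv h).
rewrite {1}ev /rbar (big_morph (sig m) (@sigD F m) (comp_poly0 _)) -sumrB.
apply: (big_ind (fun p : {poly F} => n %| p)) => [|x y hx hy|i _]; [by rewrite dvdp0 | by rewrite dvdp_add |].
rewrite /sig comp_polyZ comp_Xn_poly -scalerBr -mul_polyC dvdp_mull //.
have [i0|ipos] := posnP i.
  by rewrite i0 subn0 modnn !expr0 subrr dvdp0.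
have im := ltn_ord i.
rewrite modn_small; last lia.
apply: (@E2 _ _ Hm i).
rewrite mulrBr -exprM -!exprD.
have -> : (i + m.-1 * i = i * m)%N by rewrite -subn1; nia.
have -> : (i + (m - i) = m)%N by lia.
have -> : 'X^(i * m) - 'X^m = ('X^(i * m) - 1) - n :> {poly F} by rewrite /xm1; ring.
by rewrite dvdp_sub ?E1 ?dvdpp.
Qed.


Hypothesis HF : #|F| = (q ^ 2)%N.

Lemma frfr p : fr (fr p) = p.
Proof.
apply/polyP=> i; rewrite !coef_map /= /fq -exprM mulnn -HF.
exact: expf_card.
Qed.

Definition tau p := sig m (fr p).

Lemma tauM p r : tau (p * r) = tau p * tau r.
Proof. by rewrite /tau rmorphM sigM. Qed.

Lemma tau_iff y : (n %| tau y) = (n %| y).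
Proof. by rewrite /tau sig_iff -{1}(@fr_n _ _ m Hq) dvdp_map. Qed.

Lemma tautau p : n %| tau (tau p) - p.
Proof. by rewrite /tau fr_sig frfr; exact: sigsig. Qed.

Lemma cond4 : g1 \is monic -> g1 %| n -> g2 \is monic -> g2 %| n -> (size v1 <= m)%N ->
  g1 %| perpH m q g2 * frobq q (rbar m v1) -> g2 %| v1 * perpH m q g1.
Proof.
move=> mg1 dg1 mg2 dg2 sv c2.
set g1' := perpH m q g1; set g2' := perpH m q g2; set W := frobq q (rbar m v1).
have K1 := Kkey Hq Hm mg1 dg1; have K2 := Kkey Hq Hm mg2 dg2.
set h2 := n %/ g2.
have nh : h2 * g2 = n := divpK dg2.
have h20 : h2 != 0 by apply: contra_neq (n_neq0 F Hm) => h; rewrite -nh h mul0r.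
rewrite -(dvdp_mul2l _ _ h20) [h2 * g2]nh -tau_iff !tauM.
have /dvdpP [j ej] : g2' %| tau h2.
  rewrite -K2 -tauM mulrC nh tau_iff; exact: dvdpp.
have /dvdpP [k ek] : g1 %| W * g2' by rewrite mulrC.
have hv : n %| tau v1 - W.
  rewrite /tau /W (frobqE Hq) -fr_sig; apply: fr_cong; exact: rbar_cong.
have hg : n %| g1 * tau g1'.
  have h : n %| tau g1 * g1' by rewrite K1.
  rewrite -tau_iff tauM in h.
  rewrite -(cong_dvd (x := tau (tau g1) * tau g1')) //.
  by rewrite -mulrBl dvdp_mulr // tautau.
rewrite (cong_dvd (y := tau h2 * (W * tau g1'))); last first.
  by rewrite -mulrBr dvdp_mull // -mulrBl dvdp_mulr.
rewrite ej.
have -> : j * g2' * (W * tau g1') = j * (W * g2') * tau g1' by ring.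
by rewrite ek -!mulrA dvdp_mull // dvdp_mull.
Qed.


Lemma dvd_cong (d x y : {poly F}) : d %| n -> n %| x - y -> (d %| x) = (d %| y).
Proof.
move=> dn h; have hd : d %| x - y := dvdp_trans dn h.
apply/idP/idP => h'.
  have e : y = x - (x - y) by ring.
  by rewrite e dvdp_sub.
have e : x = (x - y) + y by ring.
by rewrite e dvdp_add.
Qed.

Lemma codeE (a b : {poly F}) : (size a <= m)%N -> (size b <= m)%N ->
  g1 %| n -> g2 %| n ->
  QCcode m g1 (v1 * g1) 0 g2 (poly_rV a, poly_rV b) <-> (g1 %| a /\ g2 %| b - v1 * a).
Proof.
move=> sa sb d1 d2; split.
  case=> r1 [r2 [ea eb]].
  have ea' : a = red m (r1 * g1 + r2 * 0).
    by rewrite -(poly_rV_K sa) ea /vecR poly_rV_K // size_red.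
  have eb' : b = red m (r1 * (v1 * g1) + r2 * g2).
    by rewrite -(poly_rV_K sb) eb /vecR poly_rV_K // size_red.
  split.
    by rewrite ea' /red -(dvdp_mod _ d1) mulr0 addr0 dvdp_mull.
  rewrite (dvd_cong (y := r2 * g2)) ?dvdp_mull //.
  have -> : b - v1 * a - r2 * g2 = (b - (r1 * (v1 * g1) + r2 * g2))
      - v1 * (a - (r1 * g1 + r2 * 0)) by ring.
  by rewrite dvdp_sub ?dvdp_mull // ?ea' ?eb' red_cong.
case=> /dvdpP [s es] /dvdpP [t et]; exists s, t.
have sn : forall c : {poly F}, (size c <= m)%N -> red m c = c.
  by move=> c sc; rewrite /red modp_small // size_Xn_sub_1.
congr (_, _); rewrite /vecR.
  by rewrite mulr0 addr0 -es sn.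
have -> : s * (v1 * g1) + t * g2 = b.
  have -> : b = v1 * a + (b - v1 * a) by ring.
  by rewrite et es; ring.
by rewrite sn.
Qed.

End Main2.

Unset Implicit Arguments.

Theorem mainTheorem8 (F : finFieldType) (q m : nat) (g1 g2 v1 : {poly F}) :
  #|F| = (q ^ 2)%N -> (0 < m)%N ->
  g1 \is monic -> g1 %| xm1 F m ->
  g2 \is monic -> g2 %| xm1 F m ->
  (size v1 <= m)%N ->
  herm_dual_containing m q (QCcode m g1 (v1 * g1) 0 g2) <->
  [/\ g1 %| red m (perpH m q g1),
      g1 %| red m (perpH m q g2 * frobq q (rbar m v1)) &
      g2 %| red m (perpH m q g2 * red m (1 + v1 * frobq q (rbar m v1)))].
Proof.
move=> HF Hm mg1 dg1 mg2 dg2 sv.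
have Hq := pnat_q HF.
set W := frobq q (rbar m v1).
set g1' := perpH m q g1; set g2' := perpH m q g2.
have K1 := Kkey Hq Hm mg1 dg1; have K2 := Kkey Hq Hm mg2 dg2.
have hv : xm1 F m %| sig m (map_poly (fq Hq) v1) - W.
  rewrite /W (frobqE Hq) -fr_sig; apply: (@fr_cong _ _ m Hq); exact: (rbar_cong Hq Hm sv).
have dualE' : forall a b : {poly F}, (size a <= m)%N -> (size b <= m)%N ->
    hermDual m q (QCcode m g1 (v1 * g1) 0 g2) (poly_rV a, poly_rV b) <->
    (g1' %| a + W * b /\ g2' %| b).
  move=> a b sa sb; rewrite (dualE Hq Hm g1 g2 v1 sa sb).
  rewrite (transl Hm _ _ sa sb) -K1.
  have -> : map_poly (fq Hq) g2 * T m b = map_poly (fq Hq) g2 * (T m b + 0 * T m b).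
    by rewrite mul0r addr0.
  rewrite (transl Hm _ _ sb sb) /sig comp_poly0 mul0r addr0 -/(sig m _) -K2.
  rewrite (cong_dvd (y := sig m (map_poly (fq Hq) g1) * (a + W * b))) //.
  rewrite -mulrBr dvdp_mull //.
  have -> : a + (map_poly (fq Hq) v1 \Po 'X^(m.-1)) * b - (a + W * b) = (sig m (map_poly (fq Hq) v1) - W) * b by rewrite /sig; ring.
  exact: dvdp_mulr.
have Kred1 : forall c, (g1' %| red m c) = (g1' %| c).
  by move=> c; rewrite -!K1; apply: cong_dvd; rewrite -mulrBr dvdp_mull // red_cong.
have Kred2 : forall c, (g2' %| red m c) = (g2' %| c).
  by move=> c; rewrite -!K2; apply: cong_dvd; rewrite -mulrBr dvdp_mull // red_cong.
split.
  move=> DC.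
  have DCab : forall a b : {poly F}, (size a <= m)%N -> (size b <= m)%N ->
      g1' %| a + W * b -> g2' %| b -> g1 %| a /\ g2 %| b - v1 * a.
    move=> a b sa sb h1 h2; apply/(codeE Hm v1 sa sb dg1 dg2); apply: DC.
    by apply/(dualE' _ _ sa sb).
  have s0 : (size (0%R : {poly F}) <= m)%N by rewrite size_poly0.
  have h1 : g1' %| red m g1' + W * 0 by rewrite mulr0 addr0 Kred1 dvdpp.
  have [c1 _] := DCab _ _ (size_red Hm _) s0 h1 (dvdp0 _).
  have h1' : g1' %| red m (- (W * g2')) + W * red m g2'.
    rewrite -K1 dvdp_mull //.
    have -> : red m (- (W * g2')) + W * red m g2' =
        (red m (- (W * g2')) - (- (W * g2'))) + W * (red m g2' - g2') by ring.
    by rewrite dvdp_add ?dvdp_mull ?red_cong.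
  have h2' : g2' %| red m g2' by rewrite Kred2 dvdpp.
  have [ha hb] := DCab _ _ (size_red Hm _) (size_red Hm _) h1' h2'.
  split => //.
    by rewrite -(dvdp_mod _ dg1) mulrC -dvdpNr (dvdp_mod _ dg1).
  rewrite -(dvdp_mod _ dg2).
  rewrite (dvd_cong (m := m) (y := red m g2' - v1 * red m (- (W * g2'))) dg2) //.
  apply: congS.
  have -> : red m g2' - v1 * red m (- (W * g2')) - g2' * red m (1 + v1 * W) =
     (red m g2' - g2') - v1 * (red m (- (W * g2')) - (- (W * g2')))
     - g2' * (red m (1 + v1 * W) - (1 + v1 * W)) by ring.
  apply: dvdp_sub; first apply: dvdp_sub; try apply: dvdp_mull; exact: red_cong.
case=> c1 c2 c3 [x y] Dv.
rewrite -[x]rVpolyK -[y]rVpolyK in Dv *.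
set a := rVpoly x in Dv *; set b := rVpoly y in Dv *.
have sa : (size a <= m)%N by exact: size_poly.
have sb : (size b <= m)%N by exact: size_poly.
apply/(codeE Hm v1 sa sb dg1 dg2).
move/(dualE' _ _ sa sb): Dv => [/dvdpP [s es] /dvdpP [t et]].
rewrite -(dvdp_mod _ dg1) in c1.
have c2' : g1 %| g2' * W by rewrite (dvdp_mod _ dg1).
have c4 := cond4 Hq Hm HF mg1 dg1 mg2 dg2 sv c2'.
have c3' : g2 %| g2' * (1 + v1 * W).
  rewrite (dvdp_mod _ dg2) /red -modp_mul; exact: c3.
have ea : a = s * g1' - W * (t * g2') by rewrite -et -es; ring.
split.
  rewrite ea; apply: dvdp_sub; first exact: dvdp_mull.
  have -> : W * (t * g2') = t * (g2' * W) by ring.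
  exact: dvdp_mull.
have -> : b - v1 * a = t * (g2' * (1 + v1 * W)) - s * (v1 * g1') by rewrite ea et; ring.
by apply: dvdp_sub; apply: dvdp_mull.
Qed.
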